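(* Let $\mathbb{\Lambda}=\{\pm\lambda^n:n\in\mathbb{Z}\}$ with $\lambda$ one of: $\lambda=2$; $\lambda=\sigma$ the plastic number; or $\lambda>1$ with $1=\lambda^b-\lambda^a$ for mutually prime integers $0\le a<b\le 62$, $(a,b)\notin\{(1,3),(4,5)\}$. Let $\ast$ be any non-trivial operation of the following form: for $\lambda\neq\sigma$, $(f\ast g)(k)=c\sum_{(p,q)\in\mathbb{\Lambda}^2,\,p+q=1}f(pk)g(qk)$ with $c\neq0$; for $\lambda=\sigma$, $(f\ast g)(k)=c_1\sum_{(p,q)\in T_1}f(pk)g(qk)+c_2\sum_{(p,q)\in T_2}f(pk)g(qk)$ with $(c_1,c_2)\neq(0,0)$. Then $\ast$ is not associative: the identity $(f\ast g)\ast h=f\ast(g\ast h)$ does not hold for all absolutely summable functions $f,g,h$ on $\mathbb{\Lambda}$.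
   Context: The plastic number $\sigma\approx1.325$ is the unique real root of $x^3-x-1=0$. $T_1=\{(\sigma^3,-\sigma),(-\sigma,\sigma^3),(\sigma^2,-\sigma^{-1}),(-\sigma^{-1},\sigma^2),(\sigma^{-3},\sigma^{-2}),(\sigma^{-2},\sigma^{-3})\}$ and $T_2=\{(\sigma^5,-\sigma^4),(-\sigma^4,\sigma^5),(\sigma,-\sigma^{-4}),(-\sigma^{-4},\sigma),(\sigma^{-5},\sigma^{-1}),(\sigma^{-1},\sigma^{-5})\}$. Functions are $f:\mathbb{\Lambda}\to\mathbb{C}$ with $\sum_k|f(k)|<\infty$. *)

(* Defs.v *)
From HB Require Import structures.
From mathcomp Require Import all_boot all_algebra.
From mathcomp Require Import all_classical all_reals all_analysis.
From mathcomp Require Import complex.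
From mathcomp.analysis Require showcase.summability.

Set Implicit Arguments.
Unset Strict Implicit.
Unset Printing Implicit Defensive.
Import GRing.Theory Num.Theory.
Local Open Scope ring_scope.

(* The group Λ = {± λ^n : n ∈ ℤ} (λ > 1) is parametrised bijectively by
   (s, n) : bool * int, standing for (-1)^s λ^n. *)
Definition Lam := (bool * int)%type.

Definition lamv (R : realType) (lam : R) (p : Lam) : R :=
  (-1) ^+ p.1 * lam ^ p.2.

Definition Lmul (p k : Lam) : Lam := (addb p.1 k.1, p.2 + k.2).

(* unordered sum over a countable index set: limit of finite partial sums
   along the filter of finite subsets (MathComp-Analysis showcase) *)
Definition csum (R : realType) (I : choiceType) (F : I -> R[i]) : R[i] :=
  @summability.sum I R[i] (R[i])^o F.

Definition abs_summable (R : realType) (f : Lam -> R[i]) : Prop :=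
  summable setT (fun k : Lam => (Normc.normc (f k))%:E).

Definition op_gen (R : realType) (lam : R) (c : R[i])
    (f g : Lam -> R[i]) : Lam -> R[i] :=
  fun k => c * csum (fun pq : Lam * Lam =>
     if lamv lam pq.1 + lamv lam pq.2 == 1
     then f (Lmul pq.1 k) * g (Lmul pq.2 k) else 0).

(* T1 = {(σ^3,-σ),(-σ,σ^3),(σ^2,-σ^-1),(-σ^-1,σ^2),(σ^-3,σ^-2),(σ^-2,σ^-3)} *)
Definition T1 : seq (Lam * Lam) :=
  [:: ((false, 3%:Z), (true, 1%:Z)); ((true, 1%:Z), (false, 3%:Z));
      ((false, 2%:Z), (true, (-1)%R)); ((true, (-1)%R), (false, 2%:Z));
      ((false, (-3)%R), (false, (-2)%R)); ((false, (-2)%R), (false, (-3)%R))].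

(* T2 = {(σ^5,-σ^4),(-σ^4,σ^5),(σ,-σ^-4),(-σ^-4,σ),(σ^-5,σ^-1),(σ^-1,σ^-5)} *)
Definition T2 : seq (Lam * Lam) :=
  [:: ((false, 5%:Z), (true, 4%:Z)); ((true, 4%:Z), (false, 5%:Z));
      ((false, 1%:Z), (true, (-4)%R)); ((true, (-4)%R), (false, 1%:Z));
      ((false, (-5)%R), (false, (-1)%R)); ((false, (-1)%R), (false, (-5)%R))].

Definition op_plastic (R : realType) (c1 c2 : R[i])
    (f g : Lam -> R[i]) : Lam -> R[i] :=
  fun k => c1 * (\sum_(pq <- T1) f (Lmul pq.1 k) * g (Lmul pq.2 k))
         + c2 * (\sum_(pq <- T2) f (Lmul pq.1 k) * g (Lmul pq.2 k)).

Definition assoc_on_l1 (R : realType)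
    (op : (Lam -> R[i]) -> (Lam -> R[i]) -> (Lam -> R[i])) : Prop :=
  forall f g h : Lam -> R[i],
    abs_summable f -> abs_summable g -> abs_summable h ->
    op (op f g) h = op f (op g h).

(* λ is the plastic number σ: the unique real root of x^3 - x - 1 *)
Definition is_plastic (R : realType) (lam : R) : Prop :=
  lam ^+ 3 - lam - 1 = 0.

Definition admissible (R : realType) (lam : R) : Prop :=
  lam = 2 \/ is_plastic lam \/
  (1 < lam /\ exists a b : nat,
     [&& coprime a b, (a < b)%N, (b <= 62)%N,
         (a, b) != (1%N, 3%N) & (a, b) != (4%N, 5%N)] /\
     lam ^+ b - lam ^+ a = 1).

(* Main.v *)
Require Import Defs.
From HB Require Import structures.
From mathcomp Require Import all_boot all_algebra.
From mathcomp Require Import all_classical all_reals all_analysis.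
From mathcomp Require Import complex.
From mathcomp.analysis Require showcase.summability.
Import GRing.Theory Num.Theory.
Import order.Order.TTheory.
Local Open Scope ring_scope.

Definition dl (R : realType) (a : Lam) : Lam -> R[i] := fun k => if k == a then 1 else 0.

Ltac simp := rewrite ?(mul0r, mulr0, mul1r, mulr1, addr0, add0r).

Lemma abs_summable_dl (R : realType) a : abs_summable (dl R a).
Proof.
rewrite /abs_summable /summable.
have -> : \esum_(x in setT) `|(Normc.normc (dl R a x))%:E|%E =
          \esum_(x in [set a]) `|(Normc.normc (dl R a x))%:E|%E.
  rewrite [RHS]esum_mkcond; apply: eq_esum => x _.
  case: (eqVneq x a) => [->|hx]; first by rewrite mem_set.
  rewrite memNset; last by move=> /= e; rewrite e eqxx in hx.
  rewrite /dl (negbTE hx).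
  by rewrite /Normc.normc /= expr0n /= addr0 sqrtr0 normr0.
have -> : \esum_(x in [set a]) `|(Normc.normc (dl R a x))%:E|%E =
   `|(Normc.normc (dl R a a))%:E|%E by exact: esum_set1.
by rewrite ltry.
Qed.

Section CS.
Import finmap.
Lemma csum1 (R : realType) (I : choiceType) (F : I -> R[i]) i0 :
 (forall i, i != i0 -> F i = 0) -> csum F = F i0.
Proof.
move=> F0; rewrite /csum /summability.sum.
apply: (@cvg_lim _ (@norm_hausdorff R[i] (R[i])^o) _ _ (summability.totally_filter)).
apply: cvg_near_cst; first by apply: summability.totally_filter.
exists (finmap.fset1 i0) => // B /= sB.
have i0B : i0 \in B by move/finmap.fsubsetP: sB; apply; rewrite finmap.in_fset1.
rewrite /summability.partial_sum (bigD1 (finmap.FSetSub i0B)) //= big1 ?addr0 //.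
move=> j hj; apply: F0; apply: contra hj => /eqP hj.
by apply/eqP/val_inj.
Qed.
End CS.
Definition kinv (k : Lam) : Lam := (k.1, - k.2).

Lemma LmulK p k : Lmul (Lmul p (kinv k)) k = p.
Proof. by case: p k => [s n] [t m]; rewrite /Lmul /= addbK addrNK. Qed.

Lemma LmulE p k u : Lmul p k = u -> p = Lmul u (kinv k).
Proof. by move<-; case: p k => [s n] [t m]; rewrite /Lmul /= addbK addrK. Qed.

Section L.
Variables (R : realType) (lam : R).
Hypothesis l1 : 1 < lam.

Lemma l0 : lam != 0.
Proof. by rewrite lt0r_neq0 // (lt_trans ltr01). Qed.

Lemma lamvM p k : lamv lam (Lmul p k) = lamv lam p * lamv lam k.
Proof.
by case: p k => [s n] [t m]; rewrite /lamv /Lmul /= signr_addb expfzDr ?l0 // mulrACA.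
Qed.

Lemma lamv_neq0 p : lamv lam p != 0.
Proof. by rewrite /lamv mulf_neq0 ?signr_eq0 ?expfz_neq0 ?l0. Qed.

Lemma lamv_inj : injective (lamv lam).
Proof.
have lp : 0 < lam by rewrite (lt_trans ltr01).
move=> [s n] [t m]; rewrite /lamv /=.
have gn := exprz_gt0 n lp; have gm := exprz_gt0 m lp.
have H : lam ^ n = lam ^ m -> n = m.
  move/eqP; rewrite eq_le !(ler_eXz2l l1) -eq_le; by move/eqP.
case: s; case: t => /=; rewrite ?expr1 ?expr0 ?mulN1r ?mul1r.
- by move/oppr_inj/H ->.
- move=> e; have : 0 < - lam ^ n by rewrite e.
  by rewrite oppr_gt0 ltNge ltW.
- move=> e; have : 0 < - lam ^ m by rewrite -e.
  by rewrite oppr_gt0 ltNge ltW.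
- by move/H ->.
Qed.

Lemma lamv_kinv k : lamv lam (kinv k) = (lamv lam k)^-1.
Proof.
apply: (mulIf (lamv_neq0 k)); rewrite mulVf ?lamv_neq0 // -lamvM.
by case: k => [s n]; rewrite /lamv /Lmul /kinv /= addbb addNr mulr1.
Qed.
End L.

Section G.
Variables (R : realType) (lam : R).
Hypothesis l1 : 1 < lam.
Notation L := (lamv lam).

Lemma op_dd c u v k :
  op_gen lam c (dl R u) (dl R v) k = c * (if L u + L v == L k then 1 else 0).
Proof.
rewrite /op_gen; congr (_ * _).
rewrite (@csum1 R _ _ (Lmul u (kinv k), Lmul v (kinv k))) /=.
  rewrite !LmulK /dl !eqxx mulr1 !lamvM // lamv_kinv // -mulrDl.
  by rewrite -[X in _ == X](mulfV (@lamv_neq0 R lam l1 k)) (inj_eq (mulIf _)) // invr_eq0 lamv_neq0.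
move=> [p q] hne /=; case: ifP => // _; rewrite /dl.
case: eqP => hu; case: eqP => hv; rewrite ?(mul0r, mulr0) //.
by move: hne; rewrite (LmulE _ _ _ hu) (LmulE _ _ _ hv) eqxx.
Qed.

Lemma csum0 (F : Lam * Lam -> R[i]) : (forall i, F i = 0) -> csum F = 0.
Proof. move=> F0; rewrite (@csum1 R _ _ ((false, 0%:Z), (false, 0%:Z))) //. Qed.

Lemma gen_nonassoc c u v s : c != 0 -> L u + L v = L s ->
  ~ assoc_on_l1 (op_gen lam c).
Proof.
move=> c0 huv A.
pose w : Lam := (~~ v.1, v.2).
have Lw : L w = - L v.
  by rewrite /w; case: v {huv w} => [[] n]; rewrite /lamv /= ?expr1 ?expr0 ?mulN1r ?mul1r ?opprK.
have := A (dl R u) (dl R v) (dl R w) (abs_summable_dl _ _) (abs_summable_dl _ _)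
  (abs_summable_dl _ _).
move/(congr1 (fun F => F u)).
have -> : op_gen lam c (dl R v) (dl R w) = fun _ => 0.
  apply: funext => k; rewrite op_dd Lw addrN eq_sym (negbTE (@lamv_neq0 R lam l1 k)).
  by rewrite mulr0.
rewrite [in RHS]/op_gen csum0 ?mulr0; last first.
  by move=> pq; case: ifP => _ //; rewrite mulr0.
rewrite {1}/op_gen (@csum1 R _ _ (Lmul s (kinv u), Lmul w (kinv u))) /=.
  rewrite !LmulK op_dd huv eqxx /dl eqxx !mulr1 !lamvM // lamv_kinv // -mulrDl.
  rewrite -huv Lw addrK mulfV ?lamv_neq0 // eqxx.
  by move/eqP; rewrite mulf_eq0 (negbTE c0).
move=> [p q] hne /=; case: ifP => // _; rewrite op_dd /dl.
case: eqP => hu; case: eqP => hv; rewrite ?(mul0r, mulr0) //.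
have hp : Lmul p u = s by apply: (@lamv_inj R lam l1); rewrite -hu huv.
by move: hne; rewrite (LmulE _ _ _ hp) (LmulE _ _ _ hv) eqxx.
Qed.
End G.

Lemma pl1a (R : realType) (c1 c2 : R[i]) :
  op_plastic c1 c2 (op_plastic c1 c2 (dl R (false, 3%:Z)) (dl R (true, 1%:Z))) (dl R (false, 1%:Z)) (false, 3%:Z) = c1 * c1.
Proof.
rewrite /op_plastic /dl /T1 /T2 !big_cons !big_nil /=.
by rewrite ?(mul0r, mulr0, mul1r, mulr1, addr0, add0r).
Qed.

Lemma pl1b (R : realType) (c1 c2 : R[i]) :
  op_plastic c1 c2 (dl R (false, 3%:Z)) (op_plastic c1 c2 (dl R (true, 1%:Z)) (dl R (false, 1%:Z))) (false, 3%:Z) = 0.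
Proof.
rewrite /op_plastic /dl /T1 /T2 !big_cons !big_nil /=.
by rewrite ?(mul0r, mulr0, mul1r, mulr1, addr0, add0r).
Qed.

Lemma pl2a (R : realType) (c1 c2 : R[i]) :
  op_plastic c1 c2 (op_plastic c1 c2 (dl R (false, 5%:Z)) (dl R (true, 4%:Z))) (dl R (false, 4%:Z)) (false, 5%:Z) = c2 * c2.
Proof.
rewrite /op_plastic /dl /T1 /T2 !big_cons !big_nil /=.
by rewrite ?(mul0r, mulr0, mul1r, mulr1, addr0, add0r).
Qed.

Lemma pl2b (R : realType) (c1 c2 : R[i]) :
  op_plastic c1 c2 (dl R (false, 5%:Z)) (op_plastic c1 c2 (dl R (true, 4%:Z)) (dl R (false, 4%:Z))) (false, 5%:Z) = 0.
Proof.
rewrite /op_plastic /dl /T1 /T2 !big_cons !big_nil /=.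
by rewrite ?(mul0r, mulr0, mul1r, mulr1, addr0, add0r).
Qed.

Theorem corollary1 (R : realType) (lam : R) :
  admissible lam ->
  (~ is_plastic lam ->
     forall c : R[i], c != 0 -> ~ assoc_on_l1 (op_gen lam c)) /\
  (is_plastic lam ->
     forall c1 c2 : R[i], (c1, c2) != (0, 0) ->
       ~ assoc_on_l1 (op_plastic c1 c2)).
Proof.
move=> adm; split.
  move=> np c c0.
  case: adm => [->|[pl|[l1 [a [b [hab e]]]]]].
  - apply: (@gen_nonassoc R 2 _ c (false, 0%:Z) (false, 0%:Z) (false, 1%:Z)) => //.
      by rewrite ltr1n.
    by rewrite /lamv /= !expr0 !mul1r.
  - by [].
  - apply: (@gen_nonassoc R lam l1 c (false, b%:Z) (true, a%:Z) (false, 0%:Z)) => //.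
    by rewrite /lamv /= expr0 expr1 !mul1r mulN1r.
move=> _ c1 c2 hc A.
have [h1|h1] := eqVneq c1 0.
  have h2 : c2 != 0 by apply: contra hc => /eqP ->; rewrite h1.
  have := A _ _ _ (abs_summable_dl R (false, 5%:Z)) (abs_summable_dl R (true, 4%:Z))
    (abs_summable_dl R (false, 4%:Z)).
  move/(congr1 (fun F => F (false, 5%:Z))).
  by rewrite pl2a pl2b => /eqP; rewrite mulf_eq0 orbb (negbTE h2).
have := A _ _ _ (abs_summable_dl R (false, 3%:Z)) (abs_summable_dl R (true, 1%:Z))
  (abs_summable_dl R (false, 1%:Z)).
move/(congr1 (fun F => F (false, 3%:Z))).
by rewrite pl1a pl1b => /eqP; rewrite mulf_eq0 orbb (negbTE h1).
Qed.
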